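(* Let $F$ be a field of characteristic zero and let $Q$ be a finite quiver with vertex set $Q_0=\{1,\dots,n\}$ such that the path algebra $FQ$ is a PI algebra. Let \[A_Q=\{A\in M_n(F)\mid A_{i,j}=0 \text{ whenever there is no path in } Q \text{ from } i \text{ to } j\}.\] Then $\mathrm{Id}(FQ)=\mathrm{Id}(A_Q)$.
   Context: Paths in $Q$ include the length-zero paths $e_i$ at each vertex $i$ (so there is always a path from $i$ to $i$). The path algebra $FQ$ is the $F$-vector space with basis all paths of $Q$, with product of paths $p,q$ equal to the concatenation $pq$ if the terminal vertex of $p$ equals the starting vertex of $q$, and $0$ otherwise. $M_n(F)$ is the algebra of $n\times n$ matrices over $F$. For an $F$-algebra $A$, $\mathrm{Id}(A)$ denotes the T-ideal of the free associative algebra $F\langle X\rangle$ consisting of all polynomial identities satisfied by $A$; $A$ is PI if $\mathrm{Id}(A)\neq\{0\}$. *)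

(* Defs.v *)
From HB Require Import structures.
From mathcomp Require Import all_boot all_order all_algebra.
From mathcomp Require Import finmap.
Set Implicit Arguments. Unset Strict Implicit. Unset Printing Implicit Defensive.
Import Order.TTheory GRing.Theory Num.Theory.
Local Open Scope ring_scope.

(* A noncommutative polynomial is a finitely supported function from words
   (monomials x_{w_1} ... x_{w_k}, encoded as w : seq nat) to coefficients. *)
Definition ncpoly (F : fieldType) := {fsfun seq nat -> F with 0}.

Definition peval (F : fieldType) (T : Type) (add : T -> T -> T) (zero : T)
  (mul : T -> T -> T) (one : T) (scale : F -> T -> T)
  (f : ncpoly F) (x : nat -> T) : T :=
  \big[add/zero]_(w <- finsupp f) scale (f w) (foldr mul one (map x w)).

(* A path is a pair (i, s): a start vertex i and a (possibly empty) list of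
   composable arrows starting at i. (i, [::]) is the trivial path e_i. *)
Definition valid_path n (A : finType) (src tgt : A -> 'I_n) (i : 'I_n) (s : seq A) : bool :=
  if s is a :: s' then (src a == i) && path (fun a b => tgt a == src b) a s'
  else true.

Definition path_end n (A : finType) (tgt : A -> 'I_n) (i : 'I_n) (s : seq A) : 'I_n :=
  last i (map tgt s).

(* there is a path in Q from i to j (length-zero paths included) *)
Definition qpath_exists n (A : finType) (src tgt : A -> 'I_n) (i j : 'I_n) : Prop :=
  exists s : seq A, valid_path src tgt i s /\ path_end tgt i s = j.

(* Elements of FQ are represented as coefficient functions on pairs (i, s),
   vanishing off valid paths and with finite support. *)
Definition FQcarrier (F : fieldType) n (A : finType) := 'I_n * seq A -> F.

Definition inFQ (F : fieldType) n (A : finType) (src tgt : A -> 'I_n)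
  (a : FQcarrier F n A) : Prop :=
  (forall p, ~~ valid_path src tgt p.1 p.2 -> a p = 0) /\
  (exists l : seq ('I_n * seq A), forall p, a p != 0 -> p \in l).

Definition FQadd (F : fieldType) n (A : finType) (a b : FQcarrier F n A) : FQcarrier F n A :=
  fun p => a p + b p.
Definition FQzero (F : fieldType) n (A : finType) : FQcarrier F n A := fun _ => 0.
Definition FQscale (F : fieldType) n (A : finType) (c : F) (a : FQcarrier F n A) : FQcarrier F n A :=
  fun p => c * a p.
(* unit: sum of the trivial paths e_i *)
Definition FQone (F : fieldType) n (A : finType) : FQcarrier F n A :=
  fun p => if p.2 is [::] then 1 else 0.
(* product: bilinear extension of concatenation of paths (p q = concatenation
   if the end of p is the start of q, 0 otherwise): the coefficient of a path
   is the sum over all ways of splitting it as a prefix followed by a suffix. *)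
Definition FQmul (F : fieldType) n (A : finType) (tgt : A -> 'I_n)
  (a b : FQcarrier F n A) : FQcarrier F n A :=
  fun p => \sum_(k < (size p.2).+1)
      a (p.1, take k p.2) * b (path_end tgt p.1 (take k p.2), drop k p.2).

Definition FQeval (F : fieldType) n (A : finType) (tgt : A -> 'I_n)
  (f : ncpoly F) (x : nat -> FQcarrier F n A) : FQcarrier F n A :=
  peval (@FQadd F n A) (@FQzero F n A) (@FQmul F n A tgt) (@FQone F n A)
        (@FQscale F n A) f x.

Definition is_id_FQ (F : fieldType) n (A : finType) (src tgt : A -> 'I_n)
  (f : ncpoly F) : Prop :=
  forall x : nat -> FQcarrier F n A, (forall k, inFQ src tgt (x k)) ->
    forall p, FQeval tgt f x p = 0.

Definition inAQ (F : fieldType) n (A : finType) (src tgt : A -> 'I_n)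
  (M : 'M[F]_n) : Prop :=
  forall i j : 'I_n, ~ qpath_exists src tgt i j -> M i j = 0.

Definition Meval (F : fieldType) n (f : ncpoly F) (x : nat -> 'M[F]_n) : 'M[F]_n :=
  peval (@GRing.add _) 0 (@mulmx F n n n) 1%:M (fun c M => c *: M) f x.

Definition is_id_AQ (F : fieldType) n (A : finType) (src tgt : A -> 'I_n)
  (f : ncpoly F) : Prop :=
  forall x : nat -> 'M[F]_n, (forall k, inAQ src tgt (x k)) -> Meval f x = 0.

(* Main.v *)
Require Import Defs.
From HB Require Import structures.
From mathcomp Require Import all_boot all_order all_algebra.
From mathcomp Require Import finmap.
From Stdlib Require Import ClassicalEpsilon FunctionalExtensionality.
Import Order.TTheory GRing.Theory Num.Theory.
Local Open Scope ring_scope.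

Lemma sum_single (T : eqType) (V : nmodType) (S : seq T) x (g : T -> V) :
  uniq S -> x \in S -> (forall r, r \in S -> r != x -> g r = 0) ->
  \sum_(r <- S) g r = g x.
Proof.
move=> uS xS H; rewrite (big_rem x) //= big1_seq ?addr0 // => r /andP[_].
by rewrite mem_rem_uniq // => /andP[rx rS]; apply: H.
Qed.

Lemma sum_indep (T : eqType) (V : nmodType) (S S' : seq T) (g : T -> V) :
  uniq S -> uniq S' -> (forall r, g r != 0 -> (r \in S) && (r \in S')) ->
  \sum_(r <- S) g r = \sum_(r <- S') g r.
Proof.
move=> uS uS' H.
have E1 : forall (X Y : seq T), (forall r, g r != 0 -> r \in Y) ->
   \sum_(r <- X) g r = \sum_(r <- filter (mem Y) X) g r.
  move=> X Y HY; rewrite big_filter [RHS]big_mkcond /=; apply: eq_bigr => r _.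
  by case: ifP => // rY; apply/eqP; apply: contraFT rY => /HY.
rewrite (E1 S S') ?(E1 S' S); last 2 first.
- by move=> r /H /andP[].
- by move=> r /H /andP[].
apply: perm_big; apply: uniq_perm; rewrite ?filter_uniq // => r.
by rewrite !mem_filter andbC.
Qed.

Lemma natr_inj0 (F : fieldType) : [pchar F] =i pred0 -> injective (fun k : nat => k%:R : F).
Proof.
move=> /pcharf0P h m k /= e; apply/eqP.
wlog le : m k e / (m <= k)%N.
  by move=> W; case: (leqP m k) => [|/ltnW] hle; [apply: W | rewrite eq_sym; apply: W].
have : ((k - m)%:R == 0 :> F) by rewrite natrB // e subrr.
by rewrite h subn_eq0 => hkm; rewrite eqn_leq le hkm.
Qed.

Lemma univ (F : fieldType) (I : eqType) (s : seq I) (c : I -> F) (d : I -> nat) :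
  [pchar F] =i pred0 -> (forall t : F, \sum_(i <- s) c i * t ^+ d i = 0) ->
  forall d0, \sum_(i <- s | d i == d0) c i = 0.
Proof.
move=> ch H d0.
pose P : {poly F} := \sum_(i <- s) c i *: 'X^(d i).
have P0 : P = 0.
  apply: (@roots_geq_poly_eq0 _ P [seq k%:R | k <- iota 0 (size P)]).
  - apply/allP => x /mapP [k _ ->]; rewrite /root /P horner_sum.
    by under eq_bigr do rewrite hornerZ hornerXn; rewrite H.
  - by rewrite map_inj_uniq ?iota_uniq //; apply: natr_inj0.
  - by rewrite size_map size_iota.
have E := congr1 (fun p : {poly F} => p`_d0) P0; rewrite /= coef0 /P coef_sum in E.
apply: (etrans _ E); rewrite big_mkcond; apply: eq_bigr => i _; rewrite coefZ coefXn eq_sym.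
by case: (d0 == d i); rewrite ?mulr1 ?mulr0.
Qed.

Lemma multiv (F : fieldType) (A I : eqType) (s : seq I) (e : I -> A -> nat) :
  [pchar F] =i pred0 -> forall (L : seq A), uniq L -> forall c : I -> F,
  (forall lm : A -> F, \sum_(i <- s) c i * \prod_(a <- L) lm a ^+ e i a = 0) ->
  forall i0, \sum_(i <- s | all (fun a => e i a == e i0 a) L) c i = 0.
Proof.
move=> ch; elim=> [|a L IH] uL c H i0.
  apply: etrans (H (fun _ => 0)); rewrite big_mkcond /=.
  by apply: eq_bigr => i _; rewrite big_nil mulr1.
move: uL => /andP[aL uL].
pose c' i := if e i a == e i0 a then c i else 0.
have H' : forall lm : A -> F, \sum_(i <- s) c' i * \prod_(b <- L) lm b ^+ e i b = 0.
  move=> lm.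
  have Hu : forall t : F, \sum_(i <- s) (c i * \prod_(b <- L) lm b ^+ e i b) * t ^+ e i a = 0.
    move=> t; apply: etrans (H (fun b => if b == a then t else lm b)).
    apply: eq_bigr => i _; rewrite big_cons eqxx -mulrA [_ * t ^+ _]mulrC; congr (_ * (_ * _)).
    rewrite big_seq_cond [RHS]big_seq_cond; apply: eq_bigr => b /andP[bL _].
    by have /negbTE -> : b != a by apply: contraNneq aL => <-.
  apply: etrans (@univ F I s _ (fun i => e i a) ch Hu (e i0 a)); rewrite [RHS]big_mkcond.
  by apply: eq_bigr => i _; rewrite /c'; case: ifP; rewrite ?mul0r.
apply: etrans (IH uL c' H' i0); rewrite big_mkcond [RHS]big_mkcond.
by apply: eq_bigr => i _ /=; rewrite /c'; case: (e i a == e i0 a); case: all.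
Qed.

Lemma prod_count (F : fieldType) (A : finType) (lm : A -> F) (s : seq A) :
  \prod_(a <- s) lm a = \prod_(a <- enum A) lm a ^+ count_mem a s.
Proof.
elim: s => [|b s IH].
  by rewrite big_nil big1 // => a _; rewrite expr0.
under [RHS]eq_bigr do rewrite /= exprD.
rewrite big_split /= -IH big_cons; congr (_ * _).
rewrite (bigD1_seq b) ?mem_enum ?enum_uniq //= eqxx expr1 big1 ?mulr1 // => a ab.
by rewrite eq_sym (negbTE ab) expr0.
Qed.

Section Q.
Set Implicit Arguments. Unset Strict Implicit.
Variables (F : fieldType) (n : nat) (A : finType) (src tgt : A -> 'I_n).

Definition Pt := ('I_n * seq A)%type.
Definition pend (r : Pt) : 'I_n := path_end tgt r.1 r.2.
Definition pvalid (r : Pt) : bool := valid_path src tgt r.1 r.2.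
Definition ind (p : Pt) : FQcarrier F n A := fun r => if r == p then 1 else 0.
Definition sup (S : seq Pt) (z : FQcarrier F n A) := forall r, z r != 0 -> r \in S.

Lemma path_end_cat i s t : path_end tgt i (s ++ t) = path_end tgt (path_end tgt i s) t.
Proof. by rewrite /path_end map_cat last_cat. Qed.

Lemma valid_cat i s t : valid_path src tgt i (s ++ t) =
  valid_path src tgt i s && valid_path src tgt (path_end tgt i s) t.
Proof.
case: s => [|a s] //=; rewrite cat_path -andbA; congr (_ && (_ && _)).
rewrite /path_end /= last_map.
by case: t => [|b t] //=; rewrite eq_sym.
Qed.

Lemma ind_mul p b j t :
  FQmul tgt (ind p) b (j, t) =
  if (j == p.1) && (take (size p.2) t == p.2) then b (pend p, drop (size p.2) t) else 0.
Proof.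
case: p => p1 p2; rewrite /FQmul /=.
case: ifP => [/andP[/eqP jp /eqP tp] | H].
- have sp : (size p2 < (size t).+1)%N.
    by rewrite ltnS -tp size_take; case: ltnP => // /ltnW.
  rewrite (bigD1 (Ordinal sp)) //= big1 ?addr0.
    by rewrite /ind /pend /= tp jp eqxx mul1r.
  move=> k /eqP kne; rewrite /ind; case: eqP; rewrite ?mul0r // => -[_ tk].
  exfalso; apply: kne; apply: val_inj => /=.
  by rewrite -tk size_take; case: ltnP => //; have := ltn_ord k; rewrite ltnS => h1 h2; apply/eqP; rewrite eqn_leq h1 h2.
- apply: big1 => k _; rewrite /ind; case: eqP; rewrite ?mul0r // => -[jp tk].
  move: H; rewrite jp eqxx /= -tk.
  have -> : size (take k t) = k.
    by rewrite size_take; case: ltnP => //; have := ltn_ord k; rewrite ltnS => h1 h2; apply/eqP; rewrite eqn_leq h1 h2.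
  by rewrite eqxx.
Qed.


Definition lamP (lm : A -> F) (r : Pt) : F := \prod_(a <- r.2) lm a.
Definition Emx lm (r : Pt) : 'M[F]_n := lamP lm r *: delta_mx r.1 (pend r).
Definition Phi lm (S : seq Pt) (z : FQcarrier F n A) : 'M[F]_n :=
  \sum_(r <- S) z r *: Emx lm r.

Lemma Phi_indep lm S S' z : uniq S -> uniq S' -> sup S z -> sup S' z ->
  Phi lm S z = Phi lm S' z.
Proof.
move=> uS uS' hS hS'; apply: sum_indep => // r nz.
have zr : z r != 0 by apply: contraNneq nz => ->; rewrite scale0r.
by rewrite hS ?hS'.
Qed.

Lemma Phi_ext lm S z z' : (forall r, z r = z' r) -> Phi lm S z = Phi lm S z'.
Proof. by move=> h; apply: eq_bigr => r _; rewrite h. Qed.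

Lemma Phi_lin (I : Type) lm T (s : seq I) (c : I -> F) (g : I -> FQcarrier F n A) :
  Phi lm T (fun r => \sum_(p <- s) c p * g p r) = \sum_(p <- s) c p *: Phi lm T (g p).
Proof.
rewrite /Phi; under eq_bigr do rewrite scaler_suml.
rewrite exchange_big /=; apply: eq_bigr => p _; rewrite scaler_sumr.
by apply: eq_bigr => r _; rewrite scalerA.
Qed.

Lemma Phi_add lm T a b :
  Phi lm T (FQadd a b) = Phi lm T a + Phi lm T b.
Proof. by rewrite /Phi -big_split /=; apply: eq_bigr => r _; rewrite scalerDl. Qed.

Lemma Phi_scale lm T c a :
  Phi lm T (FQscale c a) = c *: Phi lm T a.
Proof. by rewrite /Phi scaler_sumr; apply: eq_bigr => r _; rewrite scalerA. Qed.

Lemma Phi_zero lm T : Phi lm T (@FQzero F n A) = 0.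
Proof. by rewrite /Phi big1 // => r _; rewrite scale0r. Qed.

Lemma decomp S a : uniq S -> sup S a -> forall r, a r = \sum_(p <- S) a p * ind p r.
Proof.
move=> uS hS r; have [rS|rS] := boolP (r \in S).
  rewrite (@sum_single _ _ S r) // ?/ind ?eqxx ?mulr1 // => p _ pr.
  by rewrite eq_sym (negbTE pr) mulr0.
have -> : a r = 0 by apply/eqP; apply: contraNT rS; apply: hS.
rewrite big1_seq // => p /andP[_ pS]; rewrite /ind; case: eqP => [e|]; last by rewrite mulr0.
by move: rS; rewrite e pS.
Qed.

Lemma FQmul_suml S a b : uniq S -> sup S a -> forall r,
  FQmul tgt a b r = \sum_(p <- S) a p * FQmul tgt (ind p) b r.
Proof.
move=> uS hS r; rewrite /FQmul.
under eq_bigr do rewrite (decomp uS hS) mulr_suml.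
rewrite exchange_big /=; apply: eq_bigr => p _; rewrite mulr_sumr.
by apply: eq_bigr => k _; rewrite mulrA.
Qed.

Definition Tp (p : Pt) (S' : seq Pt) : seq Pt :=
  [seq (p.1, p.2 ++ q.2) | q <- S' & q.1 == pend p].

Lemma Tp_uniq p S' : uniq S' -> uniq (Tp p S').
Proof.
move=> u; rewrite map_inj_in_uniq ?filter_uniq // => [[q1 q2] [q1' q2']].
rewrite !mem_filter /= => /andP[/eqP -> _] /andP[/eqP -> _] [] e.
by move/(congr1 (drop (size p.2))): e; rewrite !drop_size_cat // => ->.
Qed.

Lemma sup_Tp p S' b : sup S' b -> sup (Tp p S') (FQmul tgt (ind p) b).
Proof.
move=> hS [j t]; rewrite ind_mul; case: ifP => [/andP[/eqP jp /eqP tp]|]; last by rewrite eqxx.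
move=> /hS qS; apply/mapP; exists (pend p, drop (size p.2) t).
  by rewrite mem_filter /= eqxx.
by rewrite /= jp -[in LHS](cat_take_drop (size p.2) t) tp.
Qed.

Lemma Phi_Tp lm p S' b : uniq S' -> sup S' b ->
  Phi lm (Tp p S') (FQmul tgt (ind p) b) = Emx lm p *m Phi lm S' b.
Proof.
move=> uS hS; rewrite /Phi /Tp big_map big_filter mulmx_sumr [LHS]big_mkcond /=.
apply: eq_bigr => -[q1 q2] _ /=.
rewrite -scalemxAr /Emx -scalemxAr -scalemxAl mul_delta_mx_cond.
case: eqP => [e|ne]; last first.
  have /negbTE -> : pend p != q1 by apply/eqP => h; apply: ne; rewrite h.
  by rewrite mulr0n !scaler0.
rewrite -e /= eqxx mulr1n ind_mul /= !eqxx /= take_size_cat // drop_size_cat //.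
rewrite /pend /= path_end_cat -/(pend p) -e !scalerA /lamP /= big_cat /=.
by rewrite eqxx mulrA mulrAC.
Qed.

Lemma sum_nz (I : eqType) (s : seq I) (g : I -> F) :
  \sum_(i <- s) g i != 0 -> exists2 i, i \in s & g i != 0.
Proof.
move=> H; apply/hasP; apply: contraNT H => /hasPn h.
by rewrite big1_seq // => i /andP[_ /h]; rewrite negbK => /eqP.
Qed.

Lemma Phi_mul lm S S' a b : uniq S -> uniq S' -> sup S a -> sup S' b ->
  exists T, [/\ uniq T, sup T (FQmul tgt a b) &
    Phi lm T (FQmul tgt a b) = Phi lm S a *m Phi lm S' b].
Proof.
move=> uS uS' hS hS'.
set T := undup (flatten [seq Tp p S' | p <- S]).
have subT : forall p, p \in S -> forall r, r \in Tp p S' -> r \in T.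
  by move=> p pS r rT; rewrite mem_undup; apply/flatten_mapP; exists p.
have supT : forall p, p \in S -> sup T (FQmul tgt (ind p) b).
  by move=> p pS r /(sup_Tp hS') /subT; apply.
exists T; split; first exact: undup_uniq.
  move=> r; rewrite (FQmul_suml _ uS hS) => /sum_nz [p pS].
  by move=> h; apply: (supT p pS); apply: contraNneq h => ->; rewrite mulr0.
rewrite (Phi_ext _ _ (FQmul_suml b uS hS)) Phi_lin /Phi mulmx_suml.
rewrite big_seq_cond [RHS]big_seq_cond; apply: eq_bigr => p /andP[pS _].
rewrite -/(Phi lm T _) -(Phi_indep lm (Tp_uniq p uS') (undup_uniq _) (sup_Tp (p:=p) hS') (supT p pS)).
by rewrite Phi_Tp // scalemxAl.
Qed.


Definition S1 : seq Pt := [seq (i, [::]) | i <- enum 'I_n].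

Lemma S1_uniq : uniq S1.
Proof. by rewrite map_inj_uniq ?enum_uniq // => i j []. Qed.

Lemma S1_sup : sup S1 (@FQone F n A).
Proof.
move=> [j [|a t]] /=; rewrite /FQone /= ?eqxx // => _.
by apply/mapP; exists j; rewrite ?mem_enum.
Qed.

Lemma Phi_one lm : Phi lm S1 (@FQone F n A) = 1%:M.
Proof.
rewrite /Phi big_map big_enum /= mx1_sum_delta; apply: eq_bigr => i _.
by rewrite /FQone /= scale1r /Emx /lamP big_nil scale1r.
Qed.

Lemma bigFQ (I : Type) (s : seq I) (G : I -> FQcarrier F n A) r :
  (\big[@FQadd F n A/@FQzero F n A]_(i <- s) G i) r = \sum_(i <- s) G i r.
Proof.
elim: s => [|i s IH]; first by rewrite !big_nil.
by rewrite !big_cons /FQadd IH.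
Qed.

Lemma prod_eval lm (x : nat -> FQcarrier F n A) (S : nat -> seq Pt)
  (HS : forall k, uniq (S k) /\ sup (S k) (x k)) (w : seq nat) :
  exists T, [/\ uniq T, sup T (foldr (FQmul tgt) (@FQone F n A) (map x w)) &
    Phi lm T (foldr (FQmul tgt) (@FQone F n A) (map x w)) =
    foldr (@mulmx F n n n) 1%:M (map (fun k => Phi lm (S k) (x k)) w)].
Proof.
elim: w => [|k w [T [uT sT eT]]] /=.
  by exists S1; split; [exact: S1_uniq | exact: S1_sup | exact: Phi_one].
have [uk sk] := HS k.
have [T' [uT' sT' eT']] := Phi_mul lm uk uT sk sT.
by exists T'; split => //; rewrite eT' eT.
Qed.

Lemma eval_gen lm (x : nat -> FQcarrier F n A) (S : nat -> seq Pt)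
  (HS : forall k, uniq (S k) /\ sup (S k) (x k)) (f : ncpoly F) (s : seq (seq nat)) :
  exists T, [/\ uniq T,
    sup T (\big[@FQadd F n A/@FQzero F n A]_(w <- s)
        FQscale (f w) (foldr (FQmul tgt) (@FQone F n A) (map x w))) &
    Phi lm T (\big[@FQadd F n A/@FQzero F n A]_(w <- s)
        FQscale (f w) (foldr (FQmul tgt) (@FQone F n A) (map x w))) =
    \sum_(w <- s) f w *: foldr (@mulmx F n n n) 1%:M (map (fun k => Phi lm (S k) (x k)) w)].
Proof.
elim: s => [|w s [T [uT sT eT]]].
  exists [::]; split => //; last by rewrite !big_nil Phi_zero.
  by move=> r; rewrite big_nil /FQzero eqxx.
have [Tw [uTw sTw eTw]] := prod_eval lm HS w.
set T' := undup (Tw ++ T).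
have sub1 : sup T' (foldr (FQmul tgt) (@FQone F n A) (map x w)).
  by move=> r /sTw; rewrite mem_undup mem_cat => ->.
have sub2 : sup T' (\big[@FQadd F n A/@FQzero F n A]_(w <- s)
        FQscale (f w) (foldr (FQmul tgt) (@FQone F n A) (map x w))).
  by move=> r /sT; rewrite mem_undup mem_cat orbC => ->.
exists T'; split; first exact: undup_uniq.
  move=> r; rewrite big_cons {1}/FQadd /FQscale.
  have [h|h] := eqVneq (foldr (FQmul tgt) (@FQone F n A) (map x w) r) 0.
    by rewrite h mulr0 add0r; apply: sub2.
  by move=> _; apply: sub1.
rewrite big_cons Phi_add Phi_scale big_cons -eT -eTw.
rewrite (Phi_indep lm (undup_uniq _) uT sub2 sT).
by rewrite (Phi_indep lm (undup_uniq _) uTw sub1 sTw).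
Qed.

Lemma eval_Phi lm (x : nat -> FQcarrier F n A) (S : nat -> seq Pt)
  (HS : forall k, uniq (S k) /\ sup (S k) (x k)) (f : ncpoly F) :
  exists T, [/\ uniq T, sup T (FQeval tgt f x) &
    Phi lm T (FQeval tgt f x) = Meval f (fun k => Phi lm (S k) (x k))].
Proof. exact: eval_gen. Qed.

Lemma Phi_ind lm S p : uniq S -> p \in S -> Phi lm S (ind p) = Emx lm p.
Proof.
move=> uS pS; rewrite /Phi (@sum_single _ _ S p) // ?/ind ?eqxx ?scale1r // => r _ rp.
by rewrite (negbTE rp) scale0r.
Qed.

Definition sp (i j : 'I_n) : seq A :=
  epsilon (inhabits [::]) (fun s => valid_path src tgt i s /\ path_end tgt i s = j).

Lemma spP i j : qpath_exists src tgt i j ->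
  valid_path src tgt i (sp i j) /\ path_end tgt i (sp i j) = j.
Proof. by move=> [s hs]; apply: (@epsilon_spec _ (inhabits [::]) (fun s => valid_path src tgt i s /\ path_end tgt i s = j)); exists s. Qed.

Definition liftx (M : 'M[F]_n) : FQcarrier F n A :=
  fun r => \sum_(ij : 'I_n * 'I_n) M ij.1 ij.2 * ind (ij.1, sp ij.1 ij.2) r.

Definition Sx : seq Pt := undup [seq (ij.1, sp ij.1 ij.2) | ij <- enum [set: 'I_n * 'I_n]].

Lemma Sx_sup M : sup Sx (liftx M).
Proof.
move=> r /sum_nz [ij _]; rewrite /ind; have [e|ne] := eqVneq r (ij.1, sp ij.1 ij.2).
  by move=> _; rewrite mem_undup; apply/mapP; exists ij; rewrite ?mem_enum ?in_setT.
by rewrite mulr0 eqxx.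
Qed.

Lemma liftx_in M : inFQ src tgt (liftx M) <-> inFQ src tgt (liftx M).
Proof. by []. Qed.

Lemma liftx_FQ M : inAQ src tgt M -> inFQ src tgt (liftx M).
Proof.
move=> hM; split; last by exists Sx; apply: Sx_sup.
move=> r rinv; rewrite /liftx big1 // => -[i j] _ /=; rewrite /ind.
case: eqP => [e|]; last by rewrite mulr0.
have [h|h] := classic (qpath_exists src tgt i j).
  by move: rinv; rewrite e /= (spP h).1.
by rewrite hM // mul0r.
Qed.

Lemma Phi_liftx M : inAQ src tgt M -> Phi (fun _ => 1) Sx (liftx M) = M.
Proof.
move=> hM; rewrite /liftx Phi_lin.
rewrite [RHS]matrix_sum_delta pair_bigA /=; apply: eq_bigr => -[i j] _ /=.
rewrite Phi_ind ?undup_uniq // ?mem_undup; last by apply/mapP; exists (i, j); rewrite ?mem_enum ?in_setT.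
rewrite /Emx /lamP big1_seq ?scale1r // /pend /=.
have [h|h] := classic (qpath_exists src tgt i j).
  by rewrite (spP h).2.
by rewrite hM // !scale0r.
Qed.

Lemma dir1 (f : ncpoly F) : is_id_FQ src tgt f -> is_id_AQ src tgt f.
Proof.
move=> hf M hM.
pose x k := liftx (M k).
have HS : forall k, uniq Sx /\ sup Sx (x k) by split; [exact: undup_uniq | exact: Sx_sup].
have [T [uT sT eT]] := eval_Phi (fun _ => 1) HS f.
have ex : (fun k => Phi (fun _ => 1) Sx (x k)) = M.
  by apply: functional_extensionality => k; exact: Phi_liftx.
rewrite ex in eT; rewrite -eT (@Phi_ext _ _ _ (@FQzero F n A)) ?Phi_zero //.
by move=> r; exact: (hf x (fun k => liftx_FQ (hM k)) r).
Qed.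

Definition VS (z : FQcarrier F n A) := forall r, ~~ pvalid r -> z r = 0.

Lemma VS_one : VS (@FQone F n A).
Proof. by move=> [j [|a t]]. Qed.

Lemma VS_mul a b : VS a -> VS b -> VS (FQmul tgt a b).
Proof.
move=> ha hb [j t] hv; apply: big1 => k _ /=.
have [va|va] := boolP (pvalid (j, take k t)); last by rewrite ha // mul0r.
have [vb|vb] := boolP (pvalid (path_end tgt j (take k t), drop k t)); last by rewrite hb // mulr0.
have e : t = take k t ++ drop k t by rewrite cat_take_drop.
by move: hv va vb; rewrite /pvalid /= {1}e valid_cat => /negP hv va vb; case: hv; rewrite va vb.
Qed.

Lemma VS_eval (x : nat -> FQcarrier F n A) (f : ncpoly F) : (forall k, VS (x k)) -> VS (FQeval tgt f x).
Proof.
move=> hx r hr; rewrite /FQeval /peval bigFQ big1 // => w _.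
rewrite /FQscale; suff -> : foldr (FQmul tgt) (@FQone F n A) (map x w) r = 0 by rewrite mulr0.
elim: w r hr => [|k w IH] r hr /=; first exact: VS_one.
by apply: VS_mul => // r' hr'; apply: IH.
Qed.

Lemma valid_cons i a s : valid_path src tgt i (a :: s) =
  (src a == i) && valid_path src tgt (tgt a) s.
Proof. by rewrite -cat1s valid_cat /= andbT. Qed.

Lemma two_cycles i s t : valid_path src tgt i s -> valid_path src tgt i t ->
  perm_eq s t -> s != t ->
  exists v a b c1 c2, [/\ a != b, valid_path src tgt v (a :: c1),
    path_end tgt v (a :: c1) = v, valid_path src tgt v (b :: c2) &
    path_end tgt v (b :: c2) = v].
Proof.
elim: s i t => [|a s IH] i t.
  by move=> _ _; rewrite perm_sym => /perm_nilP ->.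
case: t => [|b t]; first by move=> _ _ /perm_nilP.
move=> vs vt pe ne.
have [eab|nab] := eqVneq a b.
  subst b; move: vs vt; rewrite !valid_cons => /andP[_ vs] /andP[_ vt].
  by apply: (IH (tgt a) t) => //; [rewrite -(perm_cons a) | apply: contra ne => /eqP ->].
have bs : b \in s.
  have : b \in a :: s by rewrite (perm_mem pe) mem_head.
  by rewrite in_cons eq_sym (negbTE nab).
have at' : a \in t.
  have : a \in b :: t by rewrite -(perm_mem pe) mem_head.
  by rewrite in_cons (negbTE nab).
move: vs; case/splitPr: bs => s1 s2 vs.
move: vt; case/splitPr: at' => t1 t2 vt.
have sa : src a = i by move: vs; rewrite valid_cons => /andP[/eqP].
have sb : src b = i by move: vt; rewrite valid_cons => /andP[/eqP].
exists i, a, b, s1, t1; split => //.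
- by move: vs; rewrite -cat_cons valid_cat => /andP[].
- move: vs; rewrite -cat_cons valid_cat => /andP[_]; rewrite valid_cons => /andP[/eqP <- _].
  by [].
- by move: vt; rewrite -cat_cons valid_cat => /andP[].
- move: vt; rewrite -cat_cons valid_cat => /andP[_]; rewrite valid_cons => /andP[/eqP <- _].
  by [].
Qed.

Lemma cyc_cat v s t : valid_path src tgt v s -> path_end tgt v s = v ->
  valid_path src tgt v t -> path_end tgt v t = v ->
  valid_path src tgt v (s ++ t) /\ path_end tgt v (s ++ t) = v.
Proof. by move=> vs es vt et; rewrite valid_cat path_end_cat es vs vt et. Qed.

Lemma eq_cat_split (t u w : seq A) :
  (t == u ++ w) = (take (size u) t == u) && (drop (size u) t == w).
Proof.
apply/eqP/andP => [->|[/eqP e1 /eqP e2]].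
  by rewrite take_size_cat // drop_size_cat.
by rewrite -(cat_take_drop (size u) t) e1 e2.
Qed.

Section Cyc.
Variables (v : 'I_n) (a b : A) (c1 c2 : seq A).
Hypotheses (nab : a != b) (v1 : valid_path src tgt v (a :: c1))
  (e1 : path_end tgt v (a :: c1) = v) (v2 : valid_path src tgt v (b :: c2))
  (e2 : path_end tgt v (b :: c2) = v).

Definition blk k := (a :: c1) ++ flatten (nseq k (b :: c2)).
Definition Pw (w : seq nat) := flatten (map blk w).

Lemma blk_cyc k : valid_path src tgt v (blk k) /\ path_end tgt v (blk k) = v.
Proof.
have h : forall k, valid_path src tgt v (flatten (nseq k (b :: c2))) /\
    path_end tgt v (flatten (nseq k (b :: c2))) = v.
  elim => [|j [h1 h2]]; first done.
  have -> : flatten (nseq j.+1 (b :: c2)) = (b :: c2) ++ flatten (nseq j (b :: c2)) by [].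
  exact: cyc_cat.
by have [h1 h2] := h k; apply: cyc_cat.
Qed.

Lemma Pw_head w : ohead (Pw w) = None \/ ohead (Pw w) = Some a.
Proof. by case: w => [|k w]; [left|right]. Qed.

Lemma Pw_inj w w' : Pw w = Pw w' -> w = w'.
Proof.
elim: w w' => [|k w IH] [|k' w'] //=.
rewrite {1 2}/Pw /= -/(Pw w) -/(Pw w') /blk -!catA.
case=> /(congr1 (drop (size c1))); rewrite !drop_size_cat //.
elim: k k' => [|k IHk] [|k'].
- by move/IH ->.
- have -> : flatten (nseq k'.+1 (b :: c2)) ++ Pw w' = b :: (c2 ++ flatten (nseq k' (b :: c2)) ++ Pw w').
    by rewrite /= -catA.
  move=> /= e; have := Pw_head w; rewrite e /= => -[//|[] ba].
  by move: nab; rewrite ba eqxx.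
- have -> : flatten (nseq k.+1 (b :: c2)) ++ Pw w = b :: (c2 ++ flatten (nseq k (b :: c2)) ++ Pw w).
    by rewrite /= -catA.
  move=> /= e; have := Pw_head w'; rewrite -e /= => -[//|[] ba].
  by move: nab; rewrite ba eqxx.
- rewrite /= -!catA /=; case=> /(congr1 (drop (size c2))); rewrite !drop_size_cat //.
  by move=> /IHk [-> ->].
Qed.

Definition xc (k : nat) : FQcarrier F n A := ind (v, blk k).

Lemma xc_FQ k : inFQ src tgt (xc k).
Proof.
split.
  move=> r hr; rewrite /xc /ind; have [e|//] := eqVneq r (v, blk k).
  by move: hr; rewrite e => /negP; case; exact: (blk_cyc k).1.
exists [:: (v, blk k)] => r; rewrite /xc /ind; have [e|] := eqVneq r (v, blk k).
  by rewrite e mem_head.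
by rewrite eqxx.
Qed.

Lemma xc_prod w t : foldr (FQmul tgt) (@FQone F n A) (map xc w) (v, t) = if t == Pw w then 1 else 0.
Proof.
elim: w t => [|k w IH] t /=; first by case: t.
rewrite ind_mul -[(v, blk k).1]/v -[(v, blk k).2]/(blk k) eqxx /=.
have -> : pend (v, blk k) = v := (blk_cyc k).2.
rewrite IH; have -> : Pw (k :: w) = blk k ++ Pw w by [].
rewrite (eq_cat_split t (blk k)).
by case: (take _ _ == _).
Qed.

Lemma not_PI (f : ncpoly F) w0 : f w0 != 0 -> ~ is_id_FQ src tgt f.
Proof.
move=> fw0 hid; have := hid xc xc_FQ (v, Pw w0).
rewrite /FQeval /peval bigFQ (@sum_single _ _ _ w0).
- by rewrite /FQscale xc_prod eqxx mulr1; apply/eqP.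
- exact: fset_uniq.
- by rewrite mem_finsupp.
move=> w _ ne; rewrite /FQscale xc_prod.
case: eqP => [/Pw_inj e|]; last by rewrite mulr0.
by move: ne; rewrite e eqxx.
Qed.

End Cyc.

Lemma Phi_AQ lm S z : sup S z -> VS z -> inAQ src tgt (Phi lm S z).
Proof.
move=> hS hV i j np; rewrite /Phi summxE big1_seq // => r _.
rewrite !mxE; have [zr|zr] := eqVneq (z r) 0; first by rewrite zr mul0r.
have vr : pvalid r by apply: contraNT zr => /hV ->.
case: eqP => [ri|]; last by rewrite /= mulr0n !mulr0.
case: eqP => [rj|]; last by rewrite andbF /= mulr0n !mulr0.
by exfalso; apply: np; exists r.2; rewrite ri rj.
Qed.

Lemma dir2 (f : ncpoly F) : [pchar F] =i pred0 ->
  (exists g : ncpoly F, (exists w, g w != 0) /\ is_id_FQ src tgt g) ->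
  is_id_AQ src tgt f -> is_id_FQ src tgt f.
Proof.
move=> ch [g [[w0 gw0] gid]] hf x hx r.
pose S k := undup (epsilon (inhabits [::]) (fun l => forall p, x k p != 0 -> p \in l)).
have HS : forall k, uniq (S k) /\ sup (S k) (x k).
  move=> k; split; first exact: undup_uniq.
  have := @epsilon_spec _ (inhabits [::]) (fun l => forall p, x k p != 0 -> p \in l) (hx k).2.
  by move=> h p /h; rewrite mem_undup.
have VSx : forall k, VS (x k) by move=> k; exact: (hx k).1.
set y := FQeval tgt f x.
have [T0 [uT0 sT0 _]] := eval_Phi (fun _ => 1) HS f.
have Z : forall lm, Phi lm T0 y = 0.
  move=> lm; have [T [uT sT eT]] := eval_Phi lm HS f.
  rewrite (Phi_indep lm uT0 uT sT0 sT) eT; apply: hf => k.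
  by apply: Phi_AQ; [exact: (HS k).2 | exact: VSx].
apply/eqP; apply: contraT => yr.
have rT : r \in T0 by exact: sT0.
have vr : pvalid r by apply: contraNT yr => /(VS_eval f VSx) h; apply/eqP; exact: h.
pose c q := y q * ((q.1 == r.1) && (pend q == pend r))%:R.
have H : forall lm : A -> F, \sum_(q <- T0) c q *
    \prod_(a <- enum A) lm a ^+ count_mem a q.2 = 0.
  move=> lm; have := congr1 (fun M : 'M[F]_n => M r.1 (pend r)) (Z lm).
  rewrite /= mxE /Phi summxE => E; apply: etrans E; apply: eq_bigr => q _.
  by rewrite -prod_count !mxE /c /Emx /lamP [r.1 == _]eq_sym [pend r == _]eq_sym mulrAC -mulrA.
have := @multiv F A _ T0 (fun q a => count_mem a q.2) ch (enum A) (enum_uniq _) c H r.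
rewrite big_mkcond (@sum_single _ _ T0 r) //=.
  rewrite (introT allP) => [|a _]; last by rewrite eqxx.
  by rewrite /c !eqxx mulr1 => /eqP; rewrite (negbTE yr).
move=> q qT qr; case: ifP => // /allP hc; rewrite /c.
have [yq|yq] := eqVneq (y q) 0; first by rewrite yq mul0r.
have [e1|] := eqVneq q.1 r.1; last by rewrite /= mulr0n mulr0.
have vq : pvalid q by apply: contraNT yq => /(VS_eval f VSx) h; apply/eqP; exact: h.
have pe : perm_eq q.2 r.2.
  by rewrite /perm_eq; apply/allP => a _ /=; apply: hc; rewrite mem_enum.
have ne : q.2 != r.2.
  apply: contraNneq qr => e2; apply/eqP.
  by move: e1 e2; case: (q) => ? ?; case: (r) => ? ? /= -> ->.
move: vq vr; rewrite /pvalid e1 => vq vr.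
have [v [a [b [c1 [c2 [nab v1 ee1 v2 ee2]]]]]] := two_cycles vq vr pe ne.
by exfalso; exact: (not_PI nab v1 ee1 v2 ee2 gw0 gid).
Qed.

End Q.

Theorem corollary2 (F : fieldType) (n : nat) (A : finType) (src tgt : A -> 'I_n) :
  [pchar F] =i pred0 ->
  (exists f : ncpoly F, (exists w, f w != 0) /\ is_id_FQ src tgt f) ->
  forall f : ncpoly F, is_id_FQ src tgt f <-> is_id_AQ src tgt f.
Proof.
move=> ch PI f; split; first exact: dir1.
by move=> H; exact: dir2 ch PI H.
Qed.
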